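(* (1) Let $X=(X,\mathcal O(X))$ be a locally super-compact $L$-sober space. Then $\Sigma_L\Omega_LX=(X,\mathcal O(X))$, i.e., the Scott $L$-topology of the specialization $L$-order of $X$ equals $\mathcal O(X)$. (2) Let $(P,e)$ be a continuous $L$-dcpo. Then $\Omega_L\Sigma_L(P,e)=(P,e)$, i.e., the specialization $L$-order of the Scott $L$-topology $\sigma_L(P)$ equals $e$.
   Context: $L$ is a frame with implication $\to$. $L$-subsets: maps to $L$; nonempty: $\bigvee A=1$; ${\rm sub}_X(A,B)=\bigwedge_xA(x)\to B(x)$. $L$-topology: $\mathcal O(X)\subseteq L^X$ closed under finite meets and arbitrary joins containing all constants $a_X$; interior $A^\circ$ is the join of open sets below $A$. Super-compact: nonempty $A$ with ${\rm sub}_X(A,\bigvee_iV_i)=\bigvee_i{\rm sub}_X(A,V_i)$ for all families of open $V_i$; ${\rm SC}(X)$ their set. Locally super-compact: every open $A=\bigvee_{B\in{\rm SC}(X)}{\rm sub}_X(B,A)\wedge B^\circ$. A point of $\mathcal O(X)$: $p:\mathcal O(X)\to L$ preserving binary meets, arbitrary joins, with $p(\lambda_X)=\lambda$; $[x](A)=A(x)$; $L$-sober: $x\mapsto[x]$ bijective onto the points. For a $T_0$ space, $\Omega_LX$ is $X$ with the specialization $L$-order $e(x,y)=\bigwedge_{A\in\mathcal O(X)}A(x)\to A(y)$. For an $L$-ordered set $(P,e)$ ($e(x,x)=1$, $e(x,y)\wedge e(y,z)\le e(x,z)$, $e(x,y)\wedge e(y,x)=1\Rightarrow x=y$): ${\downarrow}y(x)=e(x,y)$;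 $\sqcup A=x$ iff $e(x,y)={\rm sub}_P(A,{\downarrow}y)$ for all $y$; directed: nonempty and $D(x)\wedge D(y)\le\bigvee_zD(z)\wedge e(x,z)\wedge e(y,z)$; ideal: directed lower set; $L$-dcpo: all directed $L$-subsets have suprema; ${\Downarrow}x(y)=\bigwedge\{e(x,\sqcup I)\to I(y):I\text{ ideal with a supremum}\}$; continuous $L$-dcpo: $L$-dcpo with each ${\Downarrow}x$ directed and $\sqcup{\Downarrow}x=x$. Scott $L$-topology $\sigma_L(P)$: upper sets $A$ ($A(x)\wedge e(x,y)\le A(y)$) with $A(\sqcup D)=\bigvee_xA(x)\wedge D(x)$ for every directed $D$ having a supremum; $\Sigma_LP=(P,\sigma_L(P))$. *)

(* Defs.v *)
Set Implicit Arguments.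
Unset Strict Implicit.

Record frame := Frame {
  car :> Type;
  fle : car -> car -> Prop;
  fle_refl : forall a, fle a a;
  fle_trans : forall a b c, fle a b -> fle b c -> fle a c;
  fle_antisym : forall a b, fle a b -> fle b a -> a = b;
  fsup : (car -> Prop) -> car;
  fsup_ub : forall (S : car -> Prop) a, S a -> fle a (fsup S);
  fsup_least : forall (S : car -> Prop) b, (forall a, S a -> fle a b) -> fle (fsup S) b;
  fmeet : car -> car -> car;
  fmeet_lb1 : forall a b, fle (fmeet a b) a;
  fmeet_lb2 : forall a b, fle (fmeet a b) b;
  fmeet_glb : forall a b c, fle c a -> fle c b -> fle c (fmeet a b);
  fdistr : forall a (S : car -> Prop),
    fmeet a (fsup S) = fsup (fun y => exists x, S x /\ y = fmeet a x)
}.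

Section FrameOps.
Variable L : frame.
Definition bigjoin (I : Type) (f : I -> L) : L := fsup (fun y => exists i, y = f i).
Definition bigmeet (I : Type) (f : I -> L) : L :=
  fsup (fun c => forall i, fle c (f i)).
Definition ftop : L := fsup (fun _ => True).
Definition fimp (a b : L) : L := fsup (fun c => fle (fmeet c a) b).
End FrameOps.

Section LSubsets.
Variable L : frame.
Variable X : Type.
Definition Lsubset := X -> L.
Definition const (a : L) : Lsubset := fun _ => a.
Definition Lnonempty (A : Lsubset) : Prop := bigjoin A = ftop L.
Definition subX (A B : Lsubset) : L := bigmeet (fun x => fimp (A x) (B x)).
Definition Ljoin (I : Type) (V : I -> Lsubset) : Lsubset := fun x => bigjoin (fun i => V i x).
Definition Lmeet (A B : Lsubset) : Lsubset := fun x => fmeet (A x) (B x).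
Definition Lle (A B : Lsubset) : Prop := forall x, fle (A x) (B x).
End LSubsets.

Section LTop.
Variable L : frame.
Variable X : Type.
Definition is_Ltopology (O : (X -> L) -> Prop) : Prop :=
  (forall A B, O A -> O B -> O (Lmeet A B)) /\
  (forall (I : Type) (V : I -> X -> L), (forall i, O (V i)) -> O (Ljoin V)) /\
  (forall a : L, O (@const L X a)).

Variable O : (X -> L) -> Prop.

Definition interior (A : X -> L) : X -> L :=
  Ljoin (fun B : {B : X -> L | O B /\ Lle B A} => proj1_sig B).

Definition super_compact (A : X -> L) : Prop :=
  Lnonempty A /\
  forall (I : Type) (V : I -> X -> L), (forall i, O (V i)) ->
    subX A (Ljoin V) = bigjoin (fun i => subX A (V i)).

Definition locally_super_compact : Prop :=
  forall A, O A ->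
    A = Ljoin (fun B : {B : X -> L | super_compact B} =>
                 Lmeet (@const L X (subX (proj1_sig B) A)) (interior (proj1_sig B))).

Definition is_point (p : (X -> L) -> L) : Prop :=
  (forall A B, O A -> O B -> p (Lmeet A B) = fmeet (p A) (p B)) /\
  (forall (I : Type) (V : I -> X -> L), (forall i, O (V i)) ->
     p (Ljoin V) = bigjoin (fun i => p (V i))) /\
  (forall a : L, p (@const L X a) = a).

(* [x](A) = A(x); L-sober: x |-> [x] is a bijection onto the points
   (maps on O(X) are identified when they agree on all open L-subsets). *)
Definition L_sober : Prop :=
  (forall x y : X, (forall A, O A -> A x = A y) -> x = y) /\
  (forall p, is_point p -> exists x : X, forall A, O A -> p A = A x).

Definition spec_order (x y : X) : L :=
  bigmeet (fun A : {A : X -> L | O A} => fimp (proj1_sig A x) (proj1_sig A y)).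
End LTop.

Section LOrder.
Variable L : frame.
Variable P : Type.
Variable e : P -> P -> L.

Definition is_Lorder : Prop :=
  (forall x, e x x = ftop L) /\
  (forall x y z, fle (fmeet (e x y) (e y z)) (e x z)) /\
  (forall x y, fmeet (e x y) (e y x) = ftop L -> x = y).

Definition down (y : P) : P -> L := fun x => e x y.

Definition is_sup (A : P -> L) (x : P) : Prop :=
  forall y, e x y = subX A (down y).

Definition directed (D : P -> L) : Prop :=
  Lnonempty D /\
  forall x y, fle (fmeet (D x) (D y))
                  (bigjoin (fun z => fmeet (D z) (fmeet (e x z) (e y z)))).

Definition lower_set (A : P -> L) : Prop :=
  forall x y, fle (fmeet (A y) (e x y)) (A x).
Definition upper_set (A : P -> L) : Prop :=
  forall x y, fle (fmeet (A x) (e x y)) (A y).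

Definition ideal (I : P -> L) : Prop := directed I /\ lower_set I.

Definition L_dcpo : Prop :=
  is_Lorder /\ forall D, directed D -> exists x, is_sup D x.

Definition waybelow (x : P) : P -> L := fun y =>
  bigmeet (fun Is : {Is : (P -> L) * P | ideal (fst Is) /\ is_sup (fst Is) (snd Is)} =>
    fimp (e x (snd (proj1_sig Is))) (fst (proj1_sig Is) y)).

Definition continuous_L_dcpo : Prop :=
  L_dcpo /\ forall x, directed (waybelow x) /\ is_sup (waybelow x) x.

Definition scott_open (A : P -> L) : Prop :=
  upper_set A /\
  forall D s, directed D -> is_sup D s ->
    A s = bigjoin (fun x => fmeet (A x) (D x)).
End LOrder.

(* Main.v *)
Require Import Defs.
From Stdlib Require Import FunctionalExtensionality.
Set Implicit Arguments. Unset Strict Implicit.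

Section F.
Variable L : frame.
Implicit Types a b c d t : L.

Lemma mI c a b : fle c a -> fle c b -> fle c (fmeet a b).
Proof. apply fmeet_glb. Qed.
Lemma mE1 c a b : fle c (fmeet a b) -> fle c a.
Proof. intro H; eapply fle_trans; [exact H| apply fmeet_lb1]. Qed.
Lemma mE2 c a b : fle c (fmeet a b) -> fle c b.
Proof. intro H; eapply fle_trans; [exact H| apply fmeet_lb2]. Qed.
Lemma topI c : fle c (ftop L).
Proof. unfold ftop. apply fsup_ub. exact I. Qed.
Lemma bjI (I : Type) (f : I -> L) i c : fle c (f i) -> fle c (bigjoin f).
Proof. intro H; eapply fle_trans; [exact H|]. apply fsup_ub. exists i; reflexivity. Qed.
Lemma bmI (I : Type) (f : I -> L) c : (forall i, fle c (f i)) -> fle c (bigmeet f).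
Proof. intro H. unfold bigmeet. apply fsup_ub. exact H. Qed.
Lemma bmE (I : Type) (f : I -> L) c i : fle c (bigmeet f) -> fle c (f i).
Proof. intro H; eapply fle_trans; [exact H|]. apply fsup_least. intros a Ha; apply Ha. Qed.
Lemma supE (S : L -> Prop) c t : fle c (fsup S) ->
  (forall x d, S x -> fle d c -> fle d x -> fle d t) -> fle c t.
Proof.
  intros H K. apply fle_trans with (fmeet c (fsup S)).
  - apply mI; [apply fle_refl|exact H].
  - rewrite fdistr. apply fsup_least. intros y [x [Sx ->]].
    apply (K x); [exact Sx| apply fmeet_lb1| apply fmeet_lb2].
Qed.
Lemma bjE (I : Type) (f : I -> L) c t : fle c (bigjoin f) ->
  (forall i d, fle d c -> fle d (f i) -> fle d t) -> fle c t.
Proof.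
  intros H K. eapply supE; [exact H|]. intros x d [i ->] H1 H2. exact (K i d H1 H2).
Qed.
Lemma impI a b c : (forall d, fle d c -> fle d a -> fle d b) -> fle c (fimp a b).
Proof. intro H. unfold fimp. apply fsup_ub. apply H; [apply fmeet_lb1|apply fmeet_lb2]. Qed.
Lemma impE a b c : fle c (fimp a b) -> fle c a -> fle c b.
Proof.
  intros H Ha. eapply supE; [exact H|]. intros x d Sx Hd Hx.
  eapply fle_trans; [|exact Sx]. apply mI; [exact Hx|eapply fle_trans; [exact Hd|exact Ha]].
Qed.
Lemma le_ext a b : (forall c, fle c a -> fle c b) -> fle a b.
Proof. intro H; apply H, fle_refl. Qed.
Lemma eq_ext a b : (forall c, fle c a -> fle c b) -> (forall c, fle c b -> fle c a) -> a = b.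
Proof. intros H K; apply fle_antisym; apply le_ext; assumption. Qed.
Lemma tr c d a : fle d c -> fle c a -> fle d a.
Proof. intros; eapply fle_trans; eassumption. Qed.
Lemma topE c a : fle c (fimp (ftop L) a) -> fle c a.
Proof. intro H. eapply impE; [exact H|]. apply topI. Qed.
End F.

Ltac down H := match type of H with fle ?d ?c =>
  repeat match goal with K : fle c ?a |- _ => apply (tr H) in K end end.
Arguments bmE {L I f c} i _.
Arguments bjI {L I f} i {c} _.
Ltac bmEin H X := generalize (bmE X H); clear H; intro H; cbn beta in H.

Unset Implicit Arguments.
Section P2.
Variable L : frame.
Variable P : Type.
Variable e : P -> P -> L.
Hypothesis Hrefl : forall x, e x x = ftop L.
Hypothesis Htrans : forall x y z, fle (fmeet (e x y) (e y z)) (e x z).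
Hypothesis Hcont : forall x, directed e (waybelow e x) /\ is_sup e (waybelow e x) x.

Notation wb := (waybelow e).
Definition mkIs (I : P -> L) s (H : ideal e I /\ is_sup e I s) :
  {Is : (P -> L) * P | ideal e (fst Is) /\ is_sup e (fst Is) (snd Is)} := exist _ (I, s) H.
Arguments mkIs {I s} H.

Lemma etr c x y z : fle c (e x y) -> fle c (e y z) -> fle c (e x z).
Proof. intros H1 H2; eapply fle_trans; [|apply Htrans]. apply mI; [exact H1|exact H2]. Qed.
Lemma etop c x : fle c (e x x).
Proof. rewrite Hrefl; apply topI. Qed.

Lemma supI D s c y : is_sup e D s ->
  (forall x d, fle d c -> fle d (D x) -> fle d (e x y)) -> fle c (e s y).
Proof.
  intros Hs H. rewrite Hs. unfold subX, down. apply bmI. intro x. apply impI.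
  intros d H1 H2. exact (H x d H1 H2).
Qed.
Lemma supE' D s c x y : is_sup e D s -> fle c (e s y) -> fle c (D x) -> fle c (e x y).
Proof.
  intros Hs H1 H2. rewrite Hs in H1. unfold subX, down in H1.
  eapply impE; [exact (bmE x H1)| exact H2].
Qed.
Lemma supE0 D s c x : is_sup e D s -> fle c (D x) -> fle c (e x s).
Proof. intros Hs H. eapply supE'; [exact Hs|apply etop|exact H]. Qed.

Lemma wbU c x y z : fle c (wb x z) -> fle c (e x y) -> fle c (wb y z).
Proof.
  intros H1 H2. unfold waybelow in H1 |- *. apply bmI. intros Is. apply impI. intros d Hd H3.
  down Hd. eapply impE; [exact (bmE Is H1)|]. eapply etr; eassumption.
Qed.

Lemma wbL c x y w : fle c (wb x y) -> fle c (e w y) -> fle c (wb x w).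
Proof.
  intros H1 H2. unfold waybelow in H1 |- *. apply bmI. intros Is. apply impI.
  intros d Hd H3. down Hd.
  pose proof (impE (bmE Is H1) H3) as H4.
  destruct Is as [[I s] [[HD HI] Hs]]. simpl in *.
  eapply tr; [|apply (HI w y)]. apply mI; [exact H4|exact H2].
Qed.

Lemma down_ideal x : ideal e (down e x) /\ is_sup e (down e x) x.
Proof.
  unfold down. split; [split; [split|]|].
  - unfold Lnonempty. apply eq_ext; intros c H; [apply topI|]. apply (bjI x). apply etop.
  - intros a b. apply le_ext. intros c H. apply (bjI x). apply mI; [apply etop|].
    exact H.
  - intros a b. apply le_ext. intros c H. eapply etr; [eapply mE2; exact H| eapply mE1; exact H].
  - intro y. unfold subX, down. apply eq_ext; intros c H.
    + apply bmI. intro z. apply impI. intros d Hd H1. down Hd. eapply etr; eassumption.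
    + eapply impE; [exact (bmE x H)| apply etop].
Qed.

Lemma wb_le c x z : fle c (wb x z) -> fle c (e z x).
Proof.
  intro H. destruct (down_ideal x) as [HI Hs]. unfold waybelow in H.
  bmEin H (mkIs (conj HI Hs)).
  eapply impE; [exact H| apply etop].
Qed.

Definition LD (D : P -> L) y := bigjoin (fun w => fmeet (D w) (e y w)).

Lemma LD_ideal D s : directed e D -> is_sup e D s -> ideal e (LD D) /\ is_sup e (LD D) s.
Proof.
  intros [Hne Hdir] Hs. unfold LD. split; [split; [split|]|].
  - unfold Lnonempty in *. apply eq_ext; intros c H; [apply topI|].
    rewrite <- Hne in H. eapply bjE; [exact H|]. intros w d _ H1.
    apply (bjI w). apply (bjI w). apply mI; [exact H1|apply etop].
  - intros a b. apply le_ext. intros c H.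
    eapply bjE; [eapply mE1; exact H|]. intros w1 d Hd H1. down Hd.
    eapply bjE; [eapply mE2; exact H|]. intros w2 d' Hd' H2. down Hd'.
    eapply bjE; [eapply tr; [|apply Hdir]; apply mI; [eapply mE1; exact H1|eapply mE1; exact H2]|].
    intros z d'' Hd'' H3. down Hd''.
    apply (bjI z). apply mI; [|apply mI].
    + apply (bjI z). apply mI; [eapply mE1; exact H3|apply etop].
    + eapply etr; [eapply mE2; exact H1|]. eapply mE1, mE2; exact H3.
    + eapply etr; [eapply mE2; exact H2|]. eapply mE2, mE2; exact H3.
  - intros x y. apply le_ext. intros c H.
    eapply bjE; [eapply mE1; exact H|]. intros w d Hd H1. down Hd.
    apply (bjI w). apply mI; [eapply mE1; exact H1|].
    eapply etr; [eapply mE2; exact H|eapply mE2; exact H1].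
  - intro y. unfold subX, down. apply eq_ext; intros c H.
    + apply bmI. intro x. apply impI. intros d Hd H1. down Hd.
      eapply bjE; [exact H1|]. intros w d' Hd' H2. down Hd'.
      eapply etr; [eapply mE2; exact H2|]. eapply etr; [|exact H].
      eapply supE0; [exact Hs|eapply mE1; exact H2].
    + eapply supI; [exact Hs|]. intros x d Hd H1. down Hd.
      eapply impE; [exact (bmE x H)|].
      apply (bjI x). apply mI; [exact H1|apply etop].
Qed.

Definition IP s z := bigjoin (fun x => fmeet (wb s x) (wb x z)).

Lemma IP_ideal s : ideal e (IP s) /\ is_sup e (IP s) s.
Proof.
  unfold IP. split; [split; [split|]|].
  - unfold Lnonempty. apply eq_ext; intros c H; [apply topI|].
    destruct (Hcont s) as [[Hne _] _]. rewrite <- Hne in H.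
    eapply bjE; [exact H|]. intros x d Hd H1. down Hd.
    destruct (Hcont x) as [[Hne' _] _].
    assert (H2 : fle d (bigjoin (wb x))) by (rewrite Hne'; apply topI).
    eapply bjE; [exact H2|]. intros z d' Hd' H3. down Hd'.
    apply (bjI z). apply (bjI x). apply mI; assumption.
  - intros a b. apply le_ext. intros c H.
    eapply bjE; [eapply mE1; exact H|]. intros x d Hd H1. down Hd.
    eapply bjE; [eapply mE2; exact H|]. intros x' d' Hd' H2. down Hd'.
    destruct (Hcont s) as [[_ Hdir] _].
    eapply bjE; [eapply tr; [|apply Hdir]; apply mI; [eapply mE1; exact H1|eapply mE1; exact H2]|].
    intros w d'' Hd'' H3. down Hd''.
    assert (Ha : fle d'' (wb w a)) by (eapply wbU; [eapply mE2; exact H1|eapply mE1, mE2; exact H3]).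
    assert (Hb : fle d'' (wb w b)) by (eapply wbU; [eapply mE2; exact H2|eapply mE2, mE2; exact H3]).
    destruct (Hcont w) as [[_ Hdir'] _].
    eapply bjE; [eapply tr; [|apply Hdir']; apply mI; [exact Ha|exact Hb]|].
    intros z d3 Hd3 H4. down Hd3.
    apply (bjI z). apply mI; [|exact (mE2 H4)].
    apply (bjI w). apply mI; [eapply mE1; exact H3|eapply mE1; exact H4].
  - intros x y. apply le_ext. intros c H.
    eapply bjE; [eapply mE1; exact H|]. intros w d Hd H1. down Hd.
    apply (bjI w). apply mI; [eapply mE1; exact H1|].
    eapply wbL; [eapply mE2; exact H1|eapply mE2; exact H].
  - intro y. unfold subX, down. apply eq_ext; intros c H.
    + apply bmI. intro z. apply impI. intros d Hd H1. down Hd.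
      eapply bjE; [exact H1|]. intros x d' Hd' H2. down Hd'.
      eapply etr; [eapply wb_le; eapply mE2; exact H2|].
      eapply etr; [eapply wb_le; eapply mE1; exact H2|exact H].
    + destruct (Hcont s) as [_ Hs].
      eapply supI; [exact Hs|]. intros x d Hd H1. down Hd.
      destruct (Hcont x) as [_ Hx].
      eapply supI; [exact Hx|]. intros z d' Hd' H2. down Hd'.
      eapply impE; [exact (bmE z H)|].
      apply (bjI x). apply mI; assumption.
Qed.

Lemma interp c s z : fle c (wb s z) -> fle c (IP s z).
Proof.
  intro H. destruct (IP_ideal s) as [HI Hs]. unfold waybelow in H.
  bmEin H (mkIs (conj HI Hs)).
  eapply impE; [exact H|apply etop].
Qed.

Lemma up_scott z : scott_open e (fun x => wb x z).
Proof.
  split.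
  - intros x y. apply le_ext. intros c H. eapply wbU; [eapply mE1; exact H|eapply mE2; exact H].
  - intros D s HD Hs. apply eq_ext; intros c H.
    + apply interp in H. unfold IP in H. eapply bjE; [exact H|]. intros x d Hd H1. down Hd.
      destruct (LD_ideal _ _ HD Hs) as [HI HIs].
      assert (H2 := mE1 H1). unfold waybelow in H2.
      bmEin H2 (mkIs (conj HI HIs)).
      assert (H3 : fle d (LD D x)) by (eapply impE; [exact H2|apply etop]).
      unfold LD in H3. eapply bjE; [exact H3|]. intros w d' Hd' H4. down Hd'.
      apply (bjI w). apply mI; [|eapply mE1; exact H4].
      eapply wbU; [eapply mE2; exact H1|eapply mE2; exact H4].
    + eapply bjE; [exact H|]. intros x d Hd H1. down Hd.
      eapply wbU; [eapply mE1; exact H1|]. eapply supE0; [exact Hs|eapply mE2; exact H1].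
Qed.

Lemma part2 x y : spec_order (scott_open e) x y = e x y.
Proof.
  unfold spec_order. apply eq_ext; intros c H.
  - destruct (Hcont x) as [_ Hx]. eapply supI; [exact Hx|]. intros z d Hd H1. down Hd.
    bmEin H (exist _ (fun x => wb x z) (up_scott z)).
    eapply wb_le. eapply impE; eassumption.
  - apply bmI. intros [A HA]. simpl. destruct (HA) as [HU _]. apply impI. intros d Hd H1. down Hd.
    eapply tr; [|apply (HU x y)]. apply mI; assumption.
Qed.
End P2.

Section P1.
Variable L : frame.
Variable X : Type.
Variable O : (X -> L) -> Prop.
Hypothesis HT : is_Ltopology O.
Hypothesis Hsob : L_sober O.
Notation e := (spec_order O).

Lemma openU V c x y : O V -> fle c (V x) -> fle c (e x y) -> fle c (V y).
Proof.
  intros HV H1 H2. unfold spec_order in H2.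
  exact (impE (bmE (exist (fun A => O A) V HV) H2) H1).
Qed.
Lemma srefl c x : fle c (e x x).
Proof. unfold spec_order. apply bmI. intro V. apply impI. intros d _ H; exact H. Qed.
Lemma str c x y z : fle c (e x y) -> fle c (e y z) -> fle c (e x z).
Proof.
  intros H1 H2. unfold spec_order at 1. apply bmI. intros [V HV]. simpl. apply impI.
  intros d Hd H3. down Hd. eapply openU; [exact HV| |exact H2]. eapply openU; eassumption.
Qed.
Lemma sT0 s t : (forall c, fle c (e s t)) -> (forall c, fle c (e t s)) -> s = t.
Proof.
  intros H1 H2. apply (proj1 Hsob). intros A HA. apply eq_ext; intros c H.
  - eapply openU; [exact HA|exact H|apply H1].
  - eapply openU; [exact HA|exact H|apply H2].
Qed.

Lemma ssupI D s c y : is_sup e D s ->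
  (forall x d, fle d c -> fle d (D x) -> fle d (e x y)) -> fle c (e s y).
Proof.
  intros Hs H. rewrite Hs. unfold subX, down. apply bmI. intro x. apply impI.
  intros d H1 H2. exact (H x d H1 H2).
Qed.
Lemma ssupE' D s c x y : is_sup e D s -> fle c (e s y) -> fle c (D x) -> fle c (e x y).
Proof.
  intros Hs H1 H2. rewrite Hs in H1. unfold subX, down in H1.
  exact (impE (bmE x H1) H2).
Qed.

Lemma open_scott A : O A -> scott_open e A.
Proof.
  intro HA. split.
  - intros x y. apply le_ext. intros c H. eapply openU; [exact HA|eapply mE1; exact H|eapply mE2; exact H].
  - intros D s [Hne Hdir] Hs.
    set (p := fun V : X -> L => bigjoin (fun x => fmeet (V x) (D x))).
    assert (Hp : is_point O p).
    { split; [|split].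
      - intros V W HV HW. unfold p, Lmeet. apply eq_ext; intros c H.
        + eapply bjE; [exact H|]. intros x d Hd H1. apply mI.
          * apply (bjI x). apply mI; [eapply mE1, mE1; exact H1|eapply mE2; exact H1].
          * apply (bjI x). apply mI; [eapply mE2, mE1; exact H1|eapply mE2; exact H1].
        + eapply bjE; [eapply mE1; exact H|]. intros x d Hd H1. down Hd.
          eapply bjE; [eapply mE2; exact H|]. intros y d' Hd' H2. down Hd'.
          eapply bjE; [eapply tr; [|apply Hdir]; apply mI; [eapply mE2; exact H1|eapply mE2; exact H2]|].
          intros z d'' Hd'' H3. down Hd''. apply (bjI z). apply mI; [apply mI|eapply mE1; exact H3].
          * eapply openU; [exact HV|eapply mE1; exact H1|eapply mE1, mE2; exact H3].
          * eapply openU; [exact HW|eapply mE1; exact H2|eapply mE2, mE2; exact H3].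
      - intros I V HV. unfold p, Ljoin. apply eq_ext; intros c H.
        + eapply bjE; [exact H|]. intros x d Hd H1.
          eapply bjE; [eapply mE1; exact H1|]. intros i d' Hd' H2. down Hd'.
          apply (bjI i). apply (bjI x). apply mI; [exact H2|eapply mE2; exact H1].
        + eapply bjE; [exact H|]. intros i d Hd H1.
          eapply bjE; [exact H1|]. intros x d' Hd' H2.
          apply (bjI x). apply mI; [apply (bjI i); eapply mE1; exact H2|eapply mE2; exact H2].
      - intro a. unfold p, const. apply eq_ext; intros c H.
        + eapply bjE; [exact H|]. intros x d _ H1. eapply mE1; exact H1.
        + assert (H0 : fle c (bigjoin D)) by (unfold Lnonempty in Hne; rewrite Hne; apply topI).
          eapply bjE; [exact H0|]. intros x d Hd H1. down Hd. apply (bjI x). apply mI; assumption. }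
    destruct (proj2 Hsob p Hp) as [t Ht].
    assert (Hts : is_sup e D t).
    { intro y. unfold subX, down. apply eq_ext; intros c H.
      - apply bmI. intro x. apply impI. intros d Hd H1. down Hd.
        unfold spec_order. apply bmI. intros [V HV]. simpl. apply impI. intros d' Hd' H2. down Hd'.
        assert (H3 : fle d' (V t)) by (rewrite <- Ht by exact HV; unfold p; apply (bjI x); apply mI; assumption).
        eapply openU; [exact HV|exact H3|exact H].
      - unfold spec_order. apply bmI. intros [V HV]. simpl. apply impI. intros d Hd H1. down Hd.
        rewrite <- Ht in H1 by exact HV. unfold p in H1.
        eapply bjE; [exact H1|]. intros x d' Hd' H2. down Hd'.
        eapply openU; [exact HV|eapply mE1; exact H2|].
        exact (impE (bmE x H) (mE2 H2)). }
    assert (Est : s = t).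
    { apply sT0; intro c.
      - eapply ssupI; [exact Hs|]. intros x d _ H1. eapply ssupE'; [exact Hts|apply srefl|exact H1].
      - eapply ssupI; [exact Hts|]. intros x d _ H1. eapply ssupE'; [exact Hs|apply srefl|exact H1]. }
    subst t. rewrite <- (Ht A HA). reflexivity.
Qed.

Hypothesis Hlsc : locally_super_compact O.

Lemma subX_const (B : X -> L) (a : L) : Lnonempty B -> subX B (const a) = a.
Proof.
  intro Hne. unfold subX, const. apply eq_ext; intros c H.
  - assert (H0 : fle c (bigjoin B)) by (unfold Lnonempty in Hne; rewrite Hne; apply topI).
    eapply bjE; [exact H0|]. intros x d Hd H1. down Hd. exact (impE (bmE x H) H1).
  - apply bmI. intro x. apply impI. intros d Hd _. down Hd. exact H.
Qed.
Lemma subX_meet (B V W : X -> L) : subX B (Lmeet V W) = fmeet (subX B V) (subX B W).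
Proof.
  unfold subX, Lmeet. apply eq_ext; intros c H.
  - apply mI; apply bmI; intro x; apply impI; intros d Hd H1; down Hd;
      pose proof (impE (bmE x H) H1) as H2; [exact (mE1 H2)|exact (mE2 H2)].
  - apply bmI; intro x; apply impI; intros d Hd H1; down Hd. apply mI.
    + exact (impE (bmE x (mE1 H)) H1).
    + exact (impE (bmE x (mE2 H)) H1).
Qed.

Definition Rp (B : X -> L) (y : X) := forall V, O V -> subX B V = V y.

Lemma sc_rep (B : X -> L) : super_compact O B -> exists y, Rp B y.
Proof.
  intros [Hne Hj]. apply (proj2 Hsob). split; [|split].
  - intros V W _ _. apply subX_meet.
  - exact Hj.
  - intro a. apply subX_const, Hne.
Qed.
Lemma rep_le (B : X -> L) y c z : Rp B y -> fle c (B z) -> fle c (e y z).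
Proof.
  intros HR H. unfold spec_order. apply bmI. intros [V HV]. simpl. apply impI.
  intros d Hd H1. down Hd. rewrite <- (HR V HV) in H1. unfold subX in H1.
  exact (impE (bmE z H1) H).
Qed.
Lemma int_open (B : X -> L) : O (interior O B).
Proof. destruct HT as [_ [Hj _]]. unfold interior. apply Hj. intros [V HVp]. exact (proj1 HVp). Qed.
Lemma int_le (B : X -> L) c z : fle c (interior O B z) -> fle c (B z).
Proof.
  intro H. unfold interior, Ljoin in H. eapply bjE; [exact H|]. intros [V HVp] d _ H1.
  simpl in H1. eapply tr; [exact H1|apply (proj2 HVp)].
Qed.
Lemma lscE (V : X -> L) x c t : O V -> fle c (V x) ->
  (forall B d, super_compact O B -> fle d c -> fle d (subX B V) -> fle d (interior O B x) -> fle d t) ->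
  fle c t.
Proof.
  intros HV H K. rewrite (Hlsc _ HV) in H. unfold Ljoin, Lmeet, const in H.
  eapply bjE; [exact H|]. intros [B HB] d Hd H1. simpl in H1.
  exact (K B d HB Hd (mE1 H1) (mE2 H1)).
Qed.

Definition Qt := {q : (X -> L) * X | super_compact O (fst q) /\ Rp (fst q) (snd q)}.
Definition mkq (B : X -> L) y (H : super_compact O B /\ Rp B y) : Qt := exist _ (B, y) H.
Definition Dt y := {B : X -> L | super_compact O B /\ Rp B y}.
Definition mkd (B : X -> L) y (H : super_compact O B /\ Rp B y) : Dt y := exist _ B H.
Arguments sc_rep {B} _.
Arguments mkd {B y} _.
Arguments mkq {B y} _.
Definition DD x y := bigjoin (fun Bs : Dt y => interior O (proj1_sig Bs) x).

Lemma DD_dir x : directed e (DD x) /\ is_sup e (DD x) x.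
Proof.
  destruct HT as [Hm [Hj Hc]].
  split; [split|].
  - unfold Lnonempty. apply eq_ext; intros c H; [apply topI|].
    eapply lscE with (V := const (ftop L)) (x := x); [apply Hc|exact H|].
    intros B d HB _ _ H1. destruct (sc_rep HB) as [y Hy].
    apply (bjI y). unfold DD. apply (bjI (mkd (conj HB Hy))). exact H1.
  - intros y1 y2. apply le_ext. intros c H. unfold DD in H.
    eapply bjE; [eapply mE1; exact H|]. intros [B1 [HB1 HR1]] d Hd H1. down Hd. simpl in H1.
    eapply bjE; [eapply mE2; exact H|]. intros [B2 [HB2 HR2]] d' Hd' H2. down Hd'. simpl in H2.
    assert (HV : O (Lmeet (interior O B1) (interior O B2))) by (apply Hm; apply int_open).
    eapply lscE with (V := Lmeet (interior O B1) (interior O B2)) (x := x); [exact HV| apply mI; [exact H1|exact H2]|].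
    intros B d'' HB Hd'' H3 H4. destruct (sc_rep HB) as [y Hy].
    rewrite (Hy _ HV) in H3. unfold Lmeet in H3.
    apply (bjI y). apply mI; [|apply mI].
    + unfold DD. apply (bjI (mkd (conj HB Hy))). exact H4.
    + eapply rep_le; [exact HR1|]. eapply int_le. exact (mE1 H3).
    + eapply rep_le; [exact HR2|]. eapply int_le. exact (mE2 H3).
  - intro w. unfold subX, down. apply eq_ext; intros c H.
    + apply bmI. intro y. apply impI. intros d Hd H1. down Hd. unfold DD in H1.
      eapply bjE; [exact H1|]. intros [B [HB HR]] d' Hd' H2. down Hd'. simpl in H2.
      eapply str; [|exact H]. eapply rep_le; [exact HR|]. eapply int_le; exact H2.
    + unfold spec_order at 1. apply bmI. intros [V HV]. simpl. apply impI. intros d Hd H1. down Hd.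
      eapply lscE; [exact HV|exact H1|]. intros B d' HB Hd' H2 H3. down Hd'.
      destruct (sc_rep HB) as [y Hy]. rewrite (Hy _ HV) in H2.
      eapply openU; [exact HV|exact H2|].
      eapply impE; [exact (bmE y H)|]. unfold DD. apply (bjI (mkd (conj HB Hy))). exact H3.
Qed.

Lemma scott_open_open A : scott_open e A -> O A.
Proof.
  intros [HU HS]. destruct HT as [Hm [Hj Hc]].
  set (W := Ljoin (fun q : Qt => Lmeet (const (A (snd (proj1_sig q)))) (interior O (fst (proj1_sig q))))).
  assert (HW : O W) by (apply Hj; intro q; apply Hm; [apply Hc|apply int_open]).
  enough (E : A = W) by (rewrite E; exact HW).
  extensionality x. apply eq_ext; intros c H.
  - destruct (DD_dir x) as [Hd Hs]. rewrite (HS _ _ Hd Hs) in H.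
    eapply bjE; [exact H|]. intros y d _ H1. unfold DD in H1.
    eapply bjE; [exact (mE2 H1)|]. intros [B [HB HR]] d' Hd' H2. down Hd'. simpl in H2.
    unfold W, Ljoin. apply (bjI (mkq (conj HB HR))). unfold Lmeet, const. simpl.
    apply mI; [exact (mE1 H1)|exact H2].
  - unfold W, Ljoin in H. eapply bjE; [exact H|]. intros [[B y] [HB HR]] d _ H1.
    unfold Lmeet, const in H1. simpl in H1.
    eapply tr; [|apply (HU y x)]. apply mI; [exact (mE1 H1)|].
    eapply rep_le; [exact HR|]. eapply int_le. exact (mE2 H1).
Qed.
End P1.

Theorem theorem4p7 (L : frame) :
  (forall (X : Type) (O : (X -> L) -> Prop),
     is_Ltopology O -> locally_super_compact O -> L_sober O ->
     forall A : X -> L, scott_open (spec_order O) A <-> O A) /\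
  (forall (P : Type) (e : P -> P -> L),
     continuous_L_dcpo e ->
     forall x y : P, spec_order (scott_open e) x y = e x y).
Proof.
  split.
  - intros X O HT Hlsc Hsob A. split.
    + apply (scott_open_open L X O HT Hsob Hlsc).
    + apply (open_scott L X O Hsob).
  - intros P e [[[Hrefl [Htrans _]] _] Hcont] x y.
    exact (part2 L P e Hrefl Htrans Hcont x y).
Qed.
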